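(* Let $\mu>0$, $a\in\left(-\frac{2\mu}{9},0\right)\cup\left(0,\frac{4\mu}{9}\right)$ and $s_1\in\left[\frac{2\mu}{3},\infty\right)$. Then $\left|\frac{\beta_n(a,s_1)}{\beta_1(a,s_1)}\right|\le n$ for all $n\ge2$.
   Context: For real $a$ and $s_1>0$ let $H(s_1,\tilde z;a)=\dfrac{27a^2\tilde z\,(2s_1-3a)}{27a^3\tilde z-27a^2\tilde z s_1-(1-\tilde z)^2s_1^3}=\sum_{n\ge0}\beta_n(a,s_1)\tilde z^n$ (Taylor expansion about $\tilde z=0$), so that $\beta_1(a,s_1)=\frac{27a^2}{s_1^3}(3a-2s_1)$. *)

(* Defs.v *)
From Stdlib Require Import Reals Arith.
From Coquelicot Require Import Coquelicot.
Open Scope R_scope.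

Definition H (s1 z a : R) : R :=
  27 * a ^ 2 * z * (2 * s1 - 3 * a) /
  (27 * a ^ 3 * z - 27 * a ^ 2 * z * s1 - (1 - z) ^ 2 * s1 ^ 3).

Definition beta (n : nat) (a s1 : R) : R :=
  Derive_n (fun z => H s1 z a) n 0 / INR (Factorial.fact n).

(* Main.v *)
Require Import Defs.
From Stdlib Require Import Reals Lra Psatz.
From Coquelicot Require Import Coquelicot.
Open Scope R_scope.

Fixpoint useq (t : R) (n : nat) : R :=
  match n with
  | O => 0
  | S m => match m with O => 1 | S k => t * useq t m - useq t k end
  end.

Lemma useq_rec t n : useq t (S (S n)) = t * useq t (S n) - useq t n.
Proof. reflexivity. Qed.

Lemma useq_inv t n : useq t (S n) ^ 2 - t * useq t (S n) * useq t n + useq t n ^ 2 = 1.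
Proof.
  induction n as [|n IH]; [simpl; ring|].
  rewrite useq_rec. rewrite <- IH. ring.
Qed.

Lemma useq_step t n : -2 <= t <= 2 -> Rabs (useq t (S n)) <= Rabs (useq t n) + 1.
Proof.
  intros Ht. pose proof (useq_inv t n) as I.
  set (x := useq t (S n)) in *. set (y := useq t n) in *.
  assert (Hq : (x - t * y / 2) ^ 2 <= 1).
  { assert (E : (x - t * y / 2) ^ 2 = (x ^ 2 - t * x * y + y ^ 2) - (4 - t*t) * (y*y) / 4) by field.
    rewrite I in E.
    rewrite E. assert (0 <= (4 - t*t) * (y*y)) by (apply Rmult_le_pos; nra). lra. }
  assert (H1 : x - t * y / 2 <= 1) by nra.
  assert (H2 : -1 <= x - t * y / 2) by nra.
  assert (H3 : t * y / 2 <= Rabs y).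
  { unfold Rabs; destruct (Rcase_abs y); nra. }
  assert (H4 : - Rabs y <= t * y / 2).
  { unfold Rabs; destruct (Rcase_abs y); nra. }
  unfold Rabs at 1; destruct (Rcase_abs x); lra.
Qed.

Lemma useq_bound t n : -2 <= t <= 2 -> Rabs (useq t n) <= INR n.
Proof.
  intros Ht. induction n as [|n IH].
  - simpl. rewrite Rabs_R0. lra.
  - rewrite S_INR. pose proof (useq_step t n Ht). lra.
Qed.

Lemma INR_le_pow2 n : 1 <= 2 ^ n /\ INR n <= 2 ^ n.
Proof.
  induction n as [|n IH]; [simpl; lra|].
  rewrite S_INR. simpl. lra.
Qed.

Lemma CV_u t : -2 <= t <= 2 -> Rbar_le (Finite (1/2)) (CV_radius (useq t)).
Proof.
  intros Ht. destruct (CV_radius_bounded (useq t)) as [Hub _].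
  apply Hub. exists 1. intros n.
  rewrite Rabs_mult. pose proof (useq_bound t n Ht).
  pose proof (INR_le_pow2 n) as [P1 P2].
  rewrite <- RPow_abs. rewrite (Rabs_right (1/2)) by lra.
  replace ((1/2)^n) with (/ 2^n) by (rewrite <- pow_inv; f_equal; field).
  apply Rmult_le_reg_r with (2^n); [lra|].
  rewrite Rmult_assoc, Rinv_l by lra. 
  pose proof (Rabs_pos (useq t n)). nra.
Qed.

Definition vseq (t : R) : nat -> R :=
  PS_plus (PS_plus (useq t) (PS_scal (-t) (PS_incr_1 (useq t)))) (PS_incr_n (useq t) 2).

Lemma vseq_val t k : vseq t k = match k with 1%nat => 1 | _ => 0 end.
Proof.
  unfold vseq, PS_plus, PS_scal, PS_incr_1. simpl.
  destruct k as [|[|k]]; simpl; unfold plus, scal, zero, mult; simpl; unfold mult; simpl; try ring.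
Qed.

Lemma ex_u t y : -2 <= t <= 2 -> Rabs y < 1/2 -> ex_pseries (useq t) y.
Proof.
  intros Ht Hy. apply CV_radius_inside.
  eapply Rbar_lt_le_trans; [|apply CV_u; exact Ht]. simpl. exact Hy.
Qed.

Lemma series_id t y : -2 <= t <= 2 -> Rabs y < 1/2 ->
  PSeries (useq t) y * (1 - t * y + y ^ 2) = y.
Proof.
  intros Ht Hy. pose proof (ex_u t y Ht Hy) as E.
  assert (EV : PSeries (vseq t) y = y).
  { destruct (Req_dec y 0) as [->|Hy0].
    - rewrite PSeries_0, vseq_val. reflexivity.
    - assert (Ev : ex_pseries (vseq t) y).
      { unfold vseq. apply ex_pseries_plus; [apply ex_pseries_plus|].
        - exact E.
        - apply ex_pseries_scal; [apply Rmult_comm|]. apply ex_pseries_incr_1. exact E.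
        - apply ex_pseries_incr_n. exact E. }
      assert (Ev' : ex_pseries (PS_decr_1 (vseq t)) y).
      { apply ex_pseries_decr_1; [|exact Ev]. right. exists (/ y).
        change (/ y * y = 1). field. exact Hy0. }
      rewrite (PSeries_decr_1 _ _ Ev), (PSeries_decr_1 _ _ Ev').
      rewrite (PSeries_ext _ (fun _ => 0)).
      + rewrite PSeries_const_0. unfold PS_decr_1. rewrite !vseq_val. ring.
      + intros k. unfold PS_decr_1. rewrite vseq_val. reflexivity. }
  transitivity (PSeries (vseq t) y); [|exact EV]. unfold vseq.
  rewrite PSeries_plus; [|apply ex_pseries_plus|].
  - rewrite PSeries_plus.
    + rewrite PSeries_scal, PSeries_incr_1, PSeries_incr_n. ring.
    + exact E.
    + apply ex_pseries_scal; [apply Rmult_comm|]. apply ex_pseries_incr_1. exact E.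
  - exact E.
  - apply ex_pseries_scal; [apply Rmult_comm|]. apply ex_pseries_incr_1. exact E.
  - apply ex_pseries_incr_n. exact E.
Qed.

Lemma beta_eq (a s1 t : R) (n : nat) :
  0 < s1 -> t = 2 - 27 * a ^ 2 * (s1 - a) / s1 ^ 3 -> -2 <= t <= 2 ->
  beta n a s1 = - (27 * a ^ 2 * (2 * s1 - 3 * a) / s1 ^ 3) * useq t n.
Proof.
  intros Hs Ht Htb. unfold beta.
  rewrite (Derive_n_ext_loc _ (fun z => (- (27 * a ^ 2 * (2 * s1 - 3 * a) / s1 ^ 3)) * PSeries (useq t) z)).
  - rewrite Derive_n_scal_l, Derive_n_PSeries.
    + rewrite PSeries_0. unfold PS_derive_n. simpl (0 + n)%nat.
      simpl (Factorial.fact 0). change (INR 1) with 1. field. split; [lra|apply INR_fact_neq_0].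
    + rewrite Rabs_R0. eapply Rbar_lt_le_trans; [|apply CV_u; exact Htb]. simpl. lra.
  - assert (P : 0 < 1/2) by lra. exists (mkposreal _ P). intros y Hy.
    assert (Hy' : Rabs y < 1/2).
    { change (Rabs (y - 0) < 1/2) in Hy. rewrite Rminus_0_r in Hy. exact Hy. }
    assert (Hty : t * y <= 2 * Rabs y).
    { unfold Rabs; destruct (Rcase_abs y); nra. }
    assert (Hq : 0 < 1 - t * y + y ^ 2) by nra.
    pose proof (series_id t y Htb Hy') as S.
    assert (Hden : 27 * a ^ 3 * y - 27 * a ^ 2 * y * s1 - (1 - y) ^ 2 * s1 ^ 3
                   = - s1 ^ 3 * (1 - t * y + y ^ 2)).
    { rewrite Ht. field. lra. }
    unfold H. rewrite Hden. rewrite <- S at 1. field. lra.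
Qed.

Theorem mainTheorem5 (mu a s1 : R) :
  0 < mu ->
  ((- (2 * mu / 9) < a < 0) \/ (0 < a < 4 * mu / 9)) ->
  2 * mu / 3 <= s1 ->
  forall n : nat, (2 <= n)%nat ->
    Rabs (beta n a s1 / beta 1 a s1) <= INR n.
Proof.
  intros Hmu Ha Hs n Hn.
  assert (Hs0 : 0 < s1) by lra.
  set (t := 2 - 27 * a ^ 2 * (s1 - a) / s1 ^ 3).
  assert (Hsa : 0 < s1 - a) by (destruct Ha; lra).
  assert (Ha3 : 0 <= 3 * a + s1) by (destruct Ha; lra).
  assert (Ha0 : a <> 0) by (destruct Ha; lra).
  assert (Hk : 2 * s1 - 3 * a <> 0) by (destruct Ha; lra).
  assert (Hs3 : 0 < s1 ^ 3) by (apply pow_lt; lra).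
  assert (Htb : -2 <= t <= 2).
  { unfold t. split.
    - apply Rmult_le_reg_r with (s1 ^ 3); [lra|].
      unfold Rminus, Rdiv. rewrite Rmult_plus_distr_r.
      replace (- (27 * a ^ 2 * (s1 + - a) * / s1 ^ 3) * s1 ^ 3) with (- (27 * a ^ 2 * (s1 - a)))
        by (field; lra).
      assert (0 <= (3 * a + s1) * (3 * a - 2 * s1) ^ 2) by (apply Rmult_le_pos; [lra| apply pow2_ge_0]).
      nra.
    - assert (0 <= 27 * a ^ 2 * (s1 - a) / s1 ^ 3).
      { apply Rmult_le_pos; [apply Rmult_le_pos; [pose proof (pow2_ge_0 a); lra|lra]|].
        apply Rlt_le, Rinv_0_lt_compat; lra. }
      lra. }
  rewrite (beta_eq a s1 t n Hs0 eq_refl Htb), (beta_eq a s1 t 1 Hs0 eq_refl Htb).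
  replace (useq t 1) with 1 by reflexivity.
  replace (- (27 * a ^ 2 * (2 * s1 - 3 * a) / s1 ^ 3) * useq t n /
     (- (27 * a ^ 2 * (2 * s1 - 3 * a) / s1 ^ 3) * 1)) with (useq t n).
  - apply useq_bound; exact Htb.
  - field. repeat split; try lra; try (apply pow_nonzero; exact Ha0).
Qed.
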